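(* Let $z_1,\dots,z_{N+1}$ be distinct points on the unit circle and let $\Phi_0,\dots,\Phi_N$ be the monic orthogonal polynomials with respect to the measure $\frac{1}{N+1}\sum_{s=1}^{N+1}\delta_{z_s}$ (equal masses), with Verblunsky parameters $a_0,\dots,a_{N-1}$ ($|a_k|<1$), completed by $\Phi_{N+1}(z)=\prod_{s=1}^{N+1}(z-z_s)=z\Phi_N(z)-\overline{a_N}\Phi_N^*(z)$ with $|a_N|=1$. Let $\tilde\Phi_0,\dots,\tilde\Phi_{N+1}$ be the mirror-dual system, i.e. the monic polynomials generated by the Szegő recurrence from $\tilde a_n=-a_N\overline{a_{N-n-1}}$, $n=0,\dots,N$ (with $a_{-1}=-1$). Then $\tilde\Phi_{N+1}=\Phi_{N+1}$ and $$\tilde\Phi_N(z)=\frac{1}{N+1}\,\Phi_{N+1}'(z),$$ i.e. the mirror-dual system is the Sturmian POPUC system associated with $\Phi_{N+1}$; equivalently its orthogonality weights are proportional to $1/|\Phi_{N+1}'(z_s)|^2$.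
   Context: Szegő recurrence: $\Phi_0=1$, $\Phi_{n+1}(z)=z\Phi_n(z)-\overline{a_n}\Phi_n^*(z)$ with $\Phi_n^*(z)=z^n\overline{\Phi_n}(1/z)$ ($\overline{\Phi_n}$ = polynomial with conjugated coefficients); the $a_n$ are the Verblunsky parameters. A POPUC system $\Phi_0,\dots,\Phi_{N+1}$ (with $|a_k|<1$ for $k<N$, $|a_N|=1$) is called Sturmian if $\Phi_N=\Phi_{N+1}'/(N+1)$. *)

(* Defs.v *)
(* Complex numbers: any numClosedFieldType C (e.g. algC, R[i]). *)
From HB Require Import structures.
From mathcomp Require Import all_boot all_order all_algebra.
Set Implicit Arguments. Unset Strict Implicit. Unset Printing Implicit Defensive.
Import Order.TTheory GRing.Theory Num.Theory.
Local Open Scope ring_scope.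

Section Szego.
Variable C : numClosedFieldType.

(* Phi_n^*(z) = z^n * conj(Phi_n)(1/z): coefficient i is conj of coefficient n-i *)
Definition revstar (n : nat) (p : {poly C}) : {poly C} :=
  \poly_(i < n.+1) ((p`_(n - i))^*).

Fixpoint szego (a : nat -> C) (n : nat) : {poly C} :=
  match n with
  | 0 => 1
  | n'.+1 => 'X * szego a n' - (a n')^* *: revstar n' (szego a n')
  end.

Definition dinner (N : nat) (z : 'I_N.+1 -> C) (p q : {poly C}) : C :=
  (N.+1)%:R^-1 * \sum_(s < N.+1) p.[z s] * (q.[z s])^*.

(* mirror-dual parameters: ta_n = - a_N conj(a_{N-n-1}), n = 0..N, a_{-1} = -1
   (so ta_N = a_N). Values for n > N are irrelevant. *)
Definition mirror (a : nat -> C) (N : nat) (n : nat) : C :=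
  if (n < N)%N then - a N * (a (N - n.+1)%N)^* else - a N * (-1)^*.

End Szego.

(* Main.v *)
Require Import Defs.
From HB Require Import structures.
From mathcomp Require Import all_boot all_order all_algebra.
From mathcomp Require Import ring zify.
Import Order.TTheory GRing.Theory Num.Theory.
Local Open Scope ring_scope.
Set Implicit Arguments. Unset Strict Implicit.

Section Mat.
Variable C : numClosedFieldType.
Local Notation R := {poly C}.

Record mat := Mat { m11 : R; m12 : R; m21 : R; m22 : R }.

Definition mmul (A B : mat) : mat :=
  Mat (m11 A * m11 B + m12 A * m21 B) (m11 A * m12 B + m12 A * m22 B)
      (m21 A * m11 B + m22 A * m21 B) (m21 A * m12 B + m22 A * m22 B).
Definition mtr (A : mat) := Mat (m11 A) (m21 A) (m12 A) (m22 A).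
Definition mdet (A : mat) := m11 A * m22 A - m12 A * m21 A.

Lemma mmulA A B D : mmul A (mmul B D) = mmul (mmul A B) D.
Proof. case: A B D => [? ? ? ?] [? ? ? ?] [? ? ? ?]; rewrite /mmul /=; congr Mat; ring. Qed.
Lemma mtrM A B : mtr (mmul A B) = mmul (mtr B) (mtr A).
Proof. case: A B => [? ? ? ?] [? ? ? ?]; rewrite /mmul /mtr /=; congr Mat; ring. Qed.
Lemma mdetM A B : mdet (mmul A B) = mdet A * mdet B.
Proof. case: A B => [? ? ? ?] [? ? ? ?]; rewrite /mmul /mdet /=; ring. Qed.

Definition Amat (b : C) : mat := Mat 'X (- (b^*)%:P) (- b%:P * 'X) 1.
Definition mid : mat := Mat 1 0 0 1.

Fixpoint prodA (b : nat -> C) (n : nat) : mat :=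
  match n with 0 => mid | n'.+1 => mmul (Amat (b n')) (prodA b n') end.

Lemma mmul1 A : mmul A mid = A.
Proof. case: A => ? ? ? ?; rewrite /mmul /=; congr Mat; ring. Qed.
Lemma mmul1l A : mmul mid A = A.
Proof. case: A => ? ? ? ?; rewrite /mmul /=; congr Mat; ring. Qed.

Lemma prodA_shift b m : prodA b m.+1 = mmul (prodA (fun n => b n.+1) m) (Amat (b 0%N)).
Proof.
elim: m b => [|m IH] b; first by rewrite /= mmul1 mmul1l.
have -> : prodA b m.+2 = mmul (Amat (b m.+1)) (prodA b m.+1) by [].
by rewrite IH mmulA.
Qed.

Lemma eq_prodA b b' m : (forall n, (n < m)%N -> b n = b' n) -> prodA b m = prodA b' m.
Proof.
elim: m => [//|m IH] H /=; rewrite H // IH // => n Hn; apply: H; exact: ltnW.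
Qed.

Definition DE (u : C) : mat := Mat 1 0 0 (- u%:P * 'X).

Lemma mirror_mat u (hu : u * u^* = 1) b m :
  mmul (prodA (fun n => - u * (b (m - n.+1)%N)^*) m) (DE u) =
  mmul (DE u) (mtr (prodA b m)).
Proof.
elim: m => [|m IH].
  by rewrite /= /mmul /mtr /DE /=; congr Mat; ring.
rewrite prodA_shift.
have -> : (fun n => - u * (b (m.+1 - n.+2)%N)^*) = (fun n => - u * (b (m - n.+1)%N)^*) by [].
rewrite -mmulA.
have -> : mmul (Amat (- u * (b (m.+1 - 1)%N)^*)) (DE u) = mmul (DE u) (mtr (Amat (b m))).
  have cc : (- u * (b m)^*)^* = - u^* * b m by rewrite rmorphM /= rmorphN /= conjCK.
  rewrite subn1 /= /mmul /Amat /DE /mtr /= cc; congr Mat; rewrite ?polyCN ?polyCM; try ring.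
  have hU : u%:P * (u^*)%:P = 1 :> R by rewrite -polyCM hu.
  apply/eqP; rewrite -subr_eq0; apply/eqP.

  have -> : 'X * 0 + - ((- u^*)%:P * (b m)%:P) * (- u%:P * 'X) - (1 * (- (b m)%:P * 'X) + 0 * 1)
     = (u%:P * (u^*)%:P - 1) * (- (b m)%:P * 'X) by ring.
  by rewrite hU subrr mul0r.
by rewrite mmulA IH -mmulA -mtrM.
Qed.

Lemma mdet_prodA b n : mdet (prodA b n) = 'X^n * (\prod_(k < n) (1 - b k * (b k)^*))%:P.
Proof.
elim: n => [|n IH]; first by rewrite /= /mdet /= big_ord0; ring.
rewrite /= mdetM IH big_ord_recr /= polyCM /mdet /Amat /= exprS polyCB polyCM; ring.
Qed.
End Mat.
Section Rev.
Variable C : numClosedFieldType.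
Local Notation R := {poly C}.

Lemma revstar_coef n (p : R) i : (revstar n p)`_i = if (i <= n)%N then (p`_(n - i))^* else 0.
Proof. by rewrite /revstar coef_poly ltnS. Qed.

Lemma revstarB n (p q : R) c : revstar n (p - c *: q) = revstar n p - c^* *: revstar n q.
Proof.
apply/polyP => i; rewrite coefB coefZ !revstar_coef coefB coefZ.
case: ifP => _; last by rewrite mulr0 subr0.
by rewrite rmorphB /= rmorphM.
Qed.

Lemma revstarXM n (p : R) : revstar n.+1 ('X * p) = revstar n p.
Proof.
apply/polyP => i; rewrite !revstar_coef coefXM.
case: (leqP i n) => H.
  have -> : (i <= n.+1)%N by lia.
  have -> : (n.+1 - i == 0)%N = false by apply/eqP; lia.
  by have -> : (n.+1 - i).-1 = (n - i)%N by lia.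
case: (leqP i n.+1) => H2 //.
have -> : (n.+1 - i == 0)%N by apply/eqP; lia.
by rewrite rmorph0.
Qed.

Lemma revstar_rev n (p : R) : (size p <= n.+1)%N -> revstar n.+1 (revstar n p) = 'X * p.
Proof.
move=> Hs; apply/polyP => i; rewrite !revstar_coef coefXM.
case: (posnP i) => [->|Hi].
  rewrite /= subn0. have -> : (n.+1 <= n)%N = false by lia. by rewrite rmorph0.
case: (leqP i n.+1) => Hin.
  have -> : (n.+1 - i <= n)%N by lia.
  rewrite conjCK. by have -> : (n - (n.+1 - i))%N = i.-1 by lia.
rewrite nth_default //; apply: leq_trans Hs _; lia.
Qed.

Lemma szego_size_lead (b : nat -> C) n : (size (szego b n) <= n.+1)%N /\ (szego b n)`_n = 1.
Proof.
elim: n => [|n [IHs IHl]]; first by rewrite /= size_poly1 coef1.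
have cf : forall i, (szego b n.+1)`_i = (if i == 0%N then 0 else (szego b n)`_i.-1)
       - (b n)^* * (if (i <= n)%N then ((szego b n)`_(n - i))^* else 0).
  by move=> i; rewrite /= coefB coefXM coefZ revstar_coef.
split.
  apply/leq_sizeP => j Hj; rewrite cf.
  have -> : (j == 0)%N = false by lia. have -> : (j <= n)%N = false by lia.
  by rewrite mulr0 subr0 nth_default //=; apply: leq_trans IHs _; lia.
rewrite cf /=. have -> : (n.+1 <= n)%N = false by lia. by rewrite IHl mulr0 subr0.
Qed.

Lemma szego_mat (b : nat -> C) n : szego b n = m11 (prodA b n) + m12 (prodA b n) /\
  revstar n (szego b n) = m21 (prodA b n) + m22 (prodA b n).
Proof.
elim: n => [|n [IH1 IH2]].
  split; first by rewrite /= addr0.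
  apply/polyP => i; rewrite revstar_coef /= add0r coef1.
  by case: i => [|i] //=; rewrite coef1 /= ?rmorph1.
have Hs := (szego_size_lead b n).1.
split.
  rewrite [szego b n.+1]/= IH2 IH1 /= -!mul_polyC; ring.
rewrite [szego b n.+1]/= revstarB revstarXM revstar_rev // conjCK IH2 IH1 /= -!mul_polyC; ring.
Qed.
End Rev.

Section Eval.
Variable C : numClosedFieldType.
Local Notation R := {poly C}.

Lemma unit_conj (w : C) : `|w| = 1 -> w * w^* = 1.
Proof. by move=> h; rewrite -normCK h expr1n. Qed.

Lemma revstar_eval n (p : R) w : `|w| = 1 -> (size p <= n.+1)%N ->
  (revstar n p).[w] = w ^+ n * (p.[w])^*.
Proof.
move=> hw hs; rewrite /revstar horner_poly (horner_coef_wide w hs) rmorph_sum mulr_sumr.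
rewrite (reindex_inj rev_ord_inj); apply: eq_bigr => i _ /=.
have hi := ltn_ord i.
have -> : (n - (n.+1 - i.+1))%N = i by lia.
rewrite rmorphM rmorphXn /=.
rewrite [w ^+ n](_ : _ = w ^+ (n.+1 - i.+1) * w ^+ i); last first.
  by rewrite -exprD; congr (_ ^+ _); lia.
by rewrite mulrCA -mulrA -exprMn unit_conj // expr1n mulr1 mulrC.
Qed.

Lemma XsubC_neq0 (c : C) : 'X - c%:P != 0.
Proof. by rewrite -size_poly_eq0 size_XsubC. Qed.

Lemma ell_lem N (z : 'I_N.+1 -> C) (v : 'I_N.+1 -> C) :
  (forall k, (k < N)%N -> \sum_s v s * z s ^+ k = 0) ->
  forall f : R, (size f <= N)%N -> \sum_s v s * f.[z s] = 0.
Proof.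
move=> h f hf.
under eq_bigr => s _ do rewrite (horner_coef_wide _ hf) mulr_sumr.
rewrite exchange_big /= big1 // => i _.
under eq_bigr => s _ do rewrite mulrCA.
by rewrite -mulr_sumr h ?mulr0.
Qed.

Lemma const_lem N (z : 'I_N.+1 -> C) (v : 'I_N.+1 -> C) (P : R) :
  injective z ->
  (forall f : R, (size f <= N)%N -> \sum_s v s * f.[z s] = 0) ->
  P = \prod_(s < N.+1) ('X - (z s)%:P) -> (size P <= N.+2)%N ->
  forall s t, v s * P^`().[z s] = v t * P^`().[z t].
Proof.
move=> hz hl hP hsz s t.
case: (eqVneq s t) => [-> //|hst].
pose f := \prod_(r | (r != s) && (r != t)) ('X - (z r)%:P).
have hP1 : P = ('X - (z s)%:P) * (('X - (z t)%:P) * f).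
  rewrite hP (bigD1 s) //= (bigD1 t) //=; last by rewrite eq_sym.
have hP2 : P = ('X - (z t)%:P) * (('X - (z s)%:P) * f) by rewrite hP1 mulrCA.
have fr : forall r, r != s -> r != t -> f.[z r] = 0.
  move=> r h1 h2; rewrite /f (bigD1 r) /=; last by rewrite h1 h2.
  by rewrite hornerM hornerXsubC subrr mul0r.
have fnz : f != 0.
  apply/negP => /eqP f0; move: hsz; rewrite hP1 f0 !mulr0 size_poly0 => _.
  move: hP1; rewrite f0 !mulr0 hP => /eqP; apply/negP.
  by rewrite prodf_seq_neq0; apply/allP => r _; rewrite XsubC_neq0.
have fs : (size f <= N)%N.
  move: hsz; rewrite hP1 !size_mul ?mulf_neq0 ?XsubC_neq0 // !size_XsubC.
  move=> h; change (is_true ((2 + (2 + size f).-1).-1 <= N.+2)%N) in h; lia.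
have hl' := hl f fs.
rewrite (bigD1 s) //= (bigD1 t) /= ?(eq_sym t) // big1 ?addr0 in hl'; last first.
  by move=> r /andP [h1 h2]; rewrite fr ?mulr0.
have d1 : P^`().[z s] = (z s - z t) * f.[z s].
  by rewrite {1}hP1 derivM derivXsubC hornerD !hornerM !hornerXsubC subrr mul0r addr0 hornerC mul1r.
have d2 : P^`().[z t] = (z t - z s) * f.[z t].
  by rewrite {1}hP2 derivM derivXsubC hornerD !hornerM !hornerXsubC subrr mul0r addr0 hornerC mul1r.
rewrite d1 d2; apply/eqP; rewrite -subr_eq0; apply/eqP.
have -> : v s * ((z s - z t) * f.[z s]) - v t * ((z t - z s) * f.[z t])
   = (z s - z t) * (v s * f.[z s] + v t * f.[z t]) by ring.
by rewrite hl' mulr0.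
Qed.
End Eval.

Unset Implicit Arguments.

Theorem corollary1 (C : numClosedFieldType) (N : nat) (z : 'I_N.+1 -> C)
    (a : nat -> C)
    (hz_circ : forall s, `|z s| = 1)
    (hz_dist : injective z)
    (hortho : forall n k : nat, (n <= N)%N -> (k < n)%N ->
        dinner z (szego a n) ('X^k) = 0)
    (ha_lt : forall k : nat, (k < N)%N -> `|a k| < 1)
    (ha_N : `|a N| = 1)
    (hlast : szego a N.+1 = \prod_(s < N.+1) ('X - (z s)%:P)) :
  szego (mirror a N) N.+1 = szego a N.+1 /\
  szego (mirror a N) N = (N.+1)%:R^-1 *: (szego a N.+1)^`().
Proof.
pose u := a N.
have hu : u * u^* = 1 by apply: unit_conj.
have hU : (u^*)%:P * u%:P = 1 :> {poly C} by rewrite -polyCM mulrC hu.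
have [hPhi hPhis] := szego_mat a N.
have [hsz hlead] := szego_size_lead a N.
have hPdef : szego a N.+1 = 'X * szego a N - u^* *: revstar N (szego a N) by [].
have hMt : prodA (mirror a N) N = prodA (fun n => - u * (a (N - n.+1)%N)^*) N.
  by apply: eq_prodA => n hn; rewrite /mirror hn.
have hmir := mirror_mat hu a N.
rewrite -hMt in hmir.
have [hT hTs] := szego_mat (mirror a N) N.
have hTsz := (szego_size_lead (mirror a N) N).
set Mt := prodA (mirror a N) N in hmir hT hTs.
set M := prodA a N in hmir hPhi hPhis.
have e11 : m11 Mt = m11 M.
  by have := congr1 (@m11 _) hmir; rewrite /= !(mulr1, mulr0, mul1r, mul0r, addr0, add0r).
have e12 : m12 Mt * (- u%:P * 'X) = m21 M.
  by have := congr1 (@m12 _) hmir; rewrite /= !(mulr1, mulr0, mul1r, mul0r, addr0, add0r).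
have e21 : m21 Mt = - u%:P * 'X * m12 M.
  by have := congr1 (@m21 _) hmir; rewrite /= !(mulr1, mulr0, mul1r, mul0r, addr0, add0r).
have e22 : m22 Mt * (- u%:P * 'X) = - u%:P * 'X * m22 M.
  by have := congr1 (@m22 _) hmir; rewrite /= !(mulr1, mulr0, mul1r, mul0r, addr0, add0r).
have uX0 : - u%:P * 'X != 0 :> {poly C}.
  rewrite mulf_neq0 ?polyX_eq0 // oppr_eq0 polyC_eq0.
  by apply/negP => /eqP u0; move: hu; rewrite u0 mul0r => /eqP; rewrite eq_sym oner_eq0.
have e22' : m22 Mt = m22 M by apply: (mulIf uX0); rewrite e22 mulrC.
have e12' : 'X * m12 Mt = - (u^*)%:P * m21 M.
  rewrite -e12.
  have -> : - (u^*)%:P * (m12 Mt * (- u%:P * 'X)) = ((u^*)%:P * u%:P) * ('X * m12 Mt) by ring.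
  by rewrite hU mul1r.
have e21' : (u^*)%:P * m21 Mt = - 'X * m12 M.
  rewrite e21.
  have -> : (u^*)%:P * (- u%:P * 'X * m12 M) = - ((u^*)%:P * u%:P) * ('X * m12 M) by ring.
  by rewrite hU mulN1r mulNr.
have hXT : 'X * szego (mirror a N) N = 'X * m11 M - (u^*)%:P * m21 M.
  by rewrite hT mulrDr e12' e11; ring.
split.
  have -> : szego (mirror a N) N.+1 = 'X * szego (mirror a N) N
      - (mirror a N N)^* *: revstar N (szego (mirror a N) N) by [].
  have -> : mirror a N N = u by rewrite /mirror ltnn rmorphN1 mulrN1 opprK.
  rewrite hPdef hTs hT hPhis hPhi -!mul_polyC e11 e22'.
  have -> : 'X * (m11 M + m12 Mt) - (u^*)%:P * (m21 Mt + m22 M)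
     = 'X * m11 M + 'X * m12 Mt - (u^*)%:P * m21 Mt - (u^*)%:P * m22 M by ring.
  rewrite e12' e21'; ring.
set T := szego (mirror a N) N in hXT hTsz *.
set P := szego a N.+1 in hlast hPdef *.
pose v s := ((szego a N).[z s])^*.
have hell : forall k, (k < N)%N -> \sum_s v s * z s ^+ k = 0.
  move=> k hk; have := hortho N k (leqnn N) hk; rewrite /dinner.
  move/eqP; rewrite mulf_eq0 invr_eq0 pnatr_eq0 /= => /eqP h.
  have h' := congr1 (@Num.conj_op C) h; rewrite rmorph_sum rmorph0 in h'.
  rewrite -[RHS]h'; apply: eq_bigr => s _; rewrite rmorphM /= hornerXn conjCK //.
have hl := ell_lem hell.
have hPsz : (size P <= N.+2)%N := (szego_size_lead a N.+1).1.
have hc := const_lem hz_dist hl hlast hPsz.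
pose rho := \prod_(k < N) (1 - a k * (a k)^*).
have hrho : rho != 0.
  apply/prodf_neq0 => k _; rewrite subr_eq0 eq_sym -normCK.
  by rewrite lt_eqF // expr_lt1 // ha_lt.
have hdet := mdet_prodA a N; rewrite -/M in hdet.
have key : forall s, v s * T.[z s] = rho.
  move=> s; pose w := z s.
  have hw : `|w| = 1 := hz_circ s.
  have w0 : w != 0 by apply/negP => /eqP w0; move: hw; rewrite w0 normr0 => /eqP; rewrite eq_sym oner_eq0.
  have Pw : P.[w] = 0.
    by rewrite hlast (bigD1 s) //= hornerM hornerXsubC subrr mul0r.
  have hPs : (revstar N (szego a N)).[w] = w ^+ N * v s by rewrite revstar_eval.
  have hXTw := congr1 (fun p => p.[w]) hXT; rewrite /= !(hornerM, hornerD, hornerN, hornerX, hornerC) in hXTw.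
  have hdw := congr1 (fun p => p.[w]) hdet; rewrite /mdet /= !(hornerM, hornerD, hornerN, hornerX, hornerXn, hornerC) in hdw.
  move: Pw; rewrite hPdef hornerD hornerN hornerZ hornerM hornerX hPs hPhi hornerD => Pw.
  move: hPs; rewrite hPhis hornerD => hPs.
  apply/eqP; rewrite -subr_eq0; apply/eqP.
  apply: (mulfI (mulf_neq0 (expf_neq0 N w0) w0)).
  rewrite mulr0.
  set E11 := (m11 M).[w] in hXTw hdw Pw *.
  set E12 := (m12 M).[w] in hXTw hdw Pw *.
  set E21 := (m21 M).[w] in hXTw hdw hPs *.
  set E22 := (m22 M).[w] in hXTw hdw hPs *.
  have hu2 : u^* * (E21 + E22) = w * (E11 + E12).
    by apply/eqP; rewrite eq_sym -subr_eq0 hPs; apply/eqP; rewrite -Pw; ring.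
  have -> : w ^+ N * w * (v s * T.[w] - rho) = (w ^+ N * v s) * (w * T.[w]) - w * (w ^+ N * rho) by ring.
  rewrite -hPs hXTw -hdw.
  have -> : (E21 + E22) * (w * E11 - u^* * E21) = w * E11 * (E21 + E22) - E21 * (u^* * (E21 + E22)) by ring.
  rewrite hu2; ring.
pose c := v ord0 * P^`().[z ord0].
have hcT : forall s, c * T.[z s] = rho * P^`().[z s].
  by move=> s; rewrite /c (hc ord0 s) -(key s); ring.
pose H := c *: T - rho *: P^`().
have Hsz : (size H <= N.+1)%N.
  apply/leq_sizeP => j hj; rewrite /H coefB !coefZ coef_deriv.
  rewrite (nth_default 0 (leq_trans hTsz.1 hj)).
  rewrite (nth_default 0 (_ : (size P <= j.+1)%N)); last by apply: leq_trans hPsz _.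
  by rewrite mul0rn !mulr0 subr0.
have H0 : H = 0.
  apply/eqP; apply/negPn/negP => Hn.
  have := max_poly_roots (rs := [seq z i | i <- enum 'I_N.+1]) Hn.
  rewrite size_map size_enum_ord map_inj_uniq // enum_uniq.
  have -> : all (root H) [seq z i | i <- enum 'I_N.+1].
    apply/allP => x /mapP [i _ ->]; rewrite /root /H hornerD hornerN !hornerZ hcT subrr //.
  move=> /(_ isT isT) h; move: (leq_trans h Hsz); by rewrite ltnn.
have hcv : c = rho * (N.+1)%:R.
  have := congr1 (fun p : {poly C} => p`_N) H0; rewrite /H coefB !coefZ coef_deriv coef0.
  rewrite hTsz.2 (szego_size_lead a N.+1).2 mulr1 => /eqP; rewrite subr_eq0 => /eqP ->.
  by rewrite mulr_natr.
have n10 : (N.+1)%:R != 0 :> C by rewrite pnatr_eq0.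
have hcT' : c *: T = rho *: P^`() by apply/eqP; rewrite -subr_eq0 -/H H0.
have -> : T = (rho * (N.+1)%:R)^-1 *: (c *: T) by rewrite scalerA hcv mulVf ?mulf_neq0 // scale1r.
rewrite hcT' scalerA invfM mulrAC mulVf // mul1r //.
Qed.
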